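(* For every $i\in\{1,\dots,k\}$ and every $\gamma>0$: (a) if $c_i(0)=0$ and $p_i>(1-\varepsilon)+\delta$, then $c_i(\gamma)=0$; (b) if $c_i(0)=1$ and $p_i<(1-\varepsilon)-\delta$, then $c_i(\gamma)=1$.
   Context: Let $k\ge1$, $\varepsilon\in(0,1)$, $\delta\ge0$, examples $\mathbf{z}_1,\dots,\mathbf{z}_k$ with base conformity values $A(\mathbf{z}_i)\in\mathbb{R}$, and numbers $p_i\in[0,1]$ (estimated probabilities of correctness from the base predictor). The update function is $U^*(\mathbf{z}_i;A,\delta)=+1$ if $p_i<(1-\varepsilon)-\delta$, $-1$ if $p_i>(1-\varepsilon)+\delta$, and $0$ otherwise; for $\gamma\ge0$, $A^*_\gamma(\mathbf{z}_i)=A(\mathbf{z}_i)+\gamma U^*(\mathbf{z}_i;A,\delta)$. Define $q(\gamma)$: among indices $i\in\{1,\dots,k\}$ with $\sum_{j=1}^k\mathbb{I}[A^*_\gamma(\mathbf{z}_i)\ge A^*_\gamma(\mathbf{z}_j)]+1\ge\varepsilon(k+1)$, take those minimizing $A^*_\gamma(\mathbf{z}_i)$, and let $q(\gamma)$ be the smallest such index; $t(\gamma)=A^*_\gamma(\mathbf{z}_{q(\gamma)})$. Finally $c_i(\gamma)=\mathbb{I}[A^*_\gamma(\mathbf{z}_i)\ge t(\gamma)]$ indicates whether the prediction for example $i$ is correct. *)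

(* Defs.v *)
From mathcomp Require Import all_boot all_order all_algebra.
Set Implicit Arguments. Unset Strict Implicit. Unset Printing Implicit Defensive.
Import Order.TTheory GRing.Theory Num.Theory.
Local Open Scope ring_scope.

(* Examples z_1..z_k are indexed by 'I_k (index i : 'I_k stands for z_{i+1}). *)
Section Defs.
Variables (R : realFieldType) (k : nat).

Definition Ustar (eps delta : R) (p : 'I_k -> R) (i : 'I_k) : R :=
  if p i < (1 - eps) - delta then 1
  else if p i > (1 - eps) + delta then -1
  else 0.

Definition Astar (A p : 'I_k -> R) (eps delta gamma : R) (i : 'I_k) : R :=
  A i + gamma * Ustar eps delta p i.

Definition admissible (As : 'I_k -> R) (eps : R) (i : 'I_k) : bool :=
  eps * (k.+1)%:R <= (\sum_(j < k) ((As j <= As i)%R : bool)%:R) + 1.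

Definition qidx (As : 'I_k -> R) (eps : R) : option 'I_k :=
  [pick i | [&& admissible As eps i,
             [forall j, admissible As eps j ==> (As i <= As j)] &
             [forall j, (admissible As eps j && (As j == As i)) ==> (i <= j)%N]]].

(* t(gamma) = A*_gamma(z_{q(gamma)}) (the default 0 is never used: the set is
   nonempty since eps < 1) *)
Definition thr (As : 'I_k -> R) (eps : R) : R :=
  if qidx As eps is Some q then As q else 0.

Definition cov (A p : 'I_k -> R) (eps delta gamma : R) (i : 'I_k) : bool :=
  thr (Astar A p eps delta gamma) eps <= Astar A p eps delta gamma i.

End Defs.

(* Main.v *)
Require Import Defs.
From Stdlib Require Import FunctionalExtensionality.
From mathcomp Require Import lra.
From mathcomp Require Import all_boot all_order all_algebra.
Import Order.TTheory GRing.Theory Num.Theory.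
Local Open Scope ring_scope.

Section Aux.
Variables (R : realFieldType) (k : nat).

Lemma adm_mono (As : 'I_k -> R) eps i j :
  As i <= As j -> admissible As eps i -> admissible As eps j.
Proof.
move=> hij; rewrite /admissible => /le_trans; apply.
rewrite lerD2r; apply: ler_sum => l _.
case: (boolP (As l <= As i)) => h /=.
  by rewrite (le_trans h hij).
by rewrite ler0n.
Qed.

Lemma adm_exists (As : 'I_k -> R) eps (i0 : 'I_k) : eps <= 1 ->
  exists m, admissible As eps m.
Proof.
move=> he.
have refl : reflexive (fun a b : R => b <= a) by move=> a /=.
have trans : transitive (fun a b : R => b <= a) by move=> a b c h1 h2; exact: le_trans h2 h1.
have tot : total (fun a b : R => b <= a) by move=> a b; exact: le_total.
case: (@extremumP R _ (fun a b : R => b <= a) i0 predT As refl trans tot isT) => m _ hm.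
exists m; rewrite /admissible.
have -> : \sum_(j < k) ((As j <= As m)%R : bool)%:R = (\sum_(j < k) (1 : R)).
  by apply: eq_bigr => j _; rewrite hm.
rewrite sumr_const card_ord -natr1 -[X in _ <= X]mul1r.
by apply: ler_wpM2r => //; rewrite addr_ge0 // ler0n.
Qed.

Lemma cov_adm (As : 'I_k -> R) eps i : eps <= 1 ->
  (thr As eps <= As i) = admissible As eps i.
Proof.
move=> he; rewrite /thr /qidx.
case: pickP => [q /and3P[aq /forallP mq _] | none].
  apply/idP/idP => [h|ai]; first exact: adm_mono h aq.
  by have := mq i; rewrite ai.
exfalso.
have [m am] := @adm_exists As eps i he.
have refl : reflexive (fun a b : R => a <= b) by move=> a /=.
have trans : transitive (fun a b : R => a <= b) by move=> a b c; exact: le_trans.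
have tot : total (fun a b : R => a <= b) by move=> a b; exact: le_total.
case: (@extremumP R _ (fun a b : R => a <= b) m (admissible As eps) As refl trans tot am)
  => v av hv.
pose P := fun j => admissible As eps j && (As j == As v).
have Pv : P v by rewrite /P av eqxx.
case: (@extremumP nat _ leq v P (fun j : 'I_k => nat_of_ord j) leqnn
   (fun a b c => @leq_trans a b c) leq_total Pv) => w /andP[aw /eqP ew] hw.
have := none w; rewrite aw /=.
have -> : [forall j, admissible As eps j ==> (As w <= As j)].
  apply/forallP => j; apply/implyP => aj; rewrite ew; exact: hv.
have -> // : [forall j, (admissible As eps j && (As j == As w)) ==> (w <= j)%N].
apply/forallP => j; apply/implyP => /andP[aj /eqP ej]; apply: hw.
by rewrite /P aj ej ew eqxx.
Qed.

End Aux.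

Theorem theorem1 (R : realFieldType) (k : nat) (eps delta : R)
  (A p : 'I_k -> R) :
  (1 <= k)%N -> 0 < eps < 1 -> 0 <= delta ->
  (forall i, 0 <= p i <= 1) ->
  forall (i : 'I_k) (gamma : R), 0 < gamma ->
    (cov A p eps delta 0 i = false -> p i > (1 - eps) + delta ->
       cov A p eps delta gamma i = false) /\
    (cov A p eps delta 0 i = true -> p i < (1 - eps) - delta ->
       cov A p eps delta gamma i = true).
Proof.
move=> _ /andP[_ he1] hd _ i g hg.
have he : eps <= 1 by exact: ltW.
have A0 : Astar A p eps delta 0 = A by apply: functional_extensionality => j; rewrite /Astar mul0r addr0.
have Ub j : -1 <= Ustar eps delta p j <= 1.
  by rewrite /Ustar; case: ifP => _; [|case: ifP => _]; apply/andP; split; lra.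
rewrite /cov !cov_adm // A0; split.
- move=> h0 hp; apply: negbTE; move/negbT: h0; apply: contra.
  rewrite /admissible => /le_trans; apply; rewrite lerD2r; apply: ler_sum => l _.
  have Ui : Ustar eps delta p i = -1.
    by rewrite /Ustar hp ifF //; apply/negbTE; rewrite -leNgt; apply: ltW;
      apply: le_lt_trans hp; rewrite lerD2l (le_trans _ hd) // oppr_le0.
  case: (boolP (Astar A p eps delta g l <= Astar A p eps delta g i)) => h //=.
  have : A l <= A i.
    move: h; rewrite /Astar Ui mulrN1 => h.
    have /andP[hl _] := Ub l.
    have : A l - g <= A l + g * Ustar eps delta p l.
      by rewrite lerD2l -mulrN1 ler_pM2l.
    move=> h2; have := le_trans h2 h; by rewrite lerD2r.
  by move=> ->.
- move=> h0 hp; move: h0; rewrite /admissible => /le_trans; apply.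
  rewrite lerD2r; apply: ler_sum => l _.
  have Ui : Ustar eps delta p i = 1 by rewrite /Ustar hp.
  case: (boolP (A l <= A i)) => h //=.
  suff -> : Astar A p eps delta g l <= Astar A p eps delta g i by [].
  rewrite /Astar Ui mulr1; apply: lerD => //.
  have /andP[_ hu] := Ub l; by rewrite -[X in _ <= X]mulr1 ler_pM2l.
Qed.
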